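(* Let $T\in\mathbb{R}^{m\times m}$ be symmetric with eigendecomposition $T=Q\Lambda Q^\top$, $\Lambda=\operatorname{diag}(\lambda_1,\ldots,\lambda_m)$, let $f$ be continuously differentiable on an open interval containing the $\lambda_i$, let $u\in\mathbb{R}^n$ be nonzero, $c=Q^\top e_1$, $F$ the divided-difference matrix with $F_{ij}=\frac{f(\lambda_i)-f(\lambda_j)}{\lambda_i-\lambda_j}$ if $\lambda_i\neq\lambda_j$ and $F_{ij}=f'(\lambda_i)$ otherwise, and $G=\|u\|^2Q((cc^\top)\circ F)Q^\top$. If $S\in\mathbb{R}^{m\times m}$ satisfies $S^\top=-S$ and $Se_1=0$, then $\operatorname{tr}(G^\top[T,S])=0$, where $[T,S]=TS-ST$.
   Context: $\circ$ denotes the Hadamard product and $e_1$ the first standard basis vector of $\mathbb{R}^m$. *)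

(* Defs.v *)
From HB Require Import structures.
From mathcomp Require Import all_boot all_order all_algebra.
From mathcomp Require Import all_classical all_reals.
From mathcomp Require Import topology normedtype derive.
Set Implicit Arguments. Unset Strict Implicit. Unset Printing Implicit Defensive.
Import Order.TTheory GRing.Theory Num.Theory numFieldNormedType.Exports.
Local Open Scope ring_scope.

Definition hadamard (R : pzRingType) (p q : nat) (A B : 'M[R]_(p, q)) : 'M[R]_(p, q) :=
  \matrix_(i, j) (A i j * B i j).

Definition e1 (R : pzRingType) (m : nat) : 'cV[R]_m.+1 :=
  \col_i (if i == ord0 then 1 else 0).

Definition divdiff (R : realType) (f : R -> R) (m : nat) (lam : 'rV[R]_m) : 'M[R]_m :=
  \matrix_(i, j) (if lam 0 i != lam 0 j
                  then (f (lam 0 i) - f (lam 0 j)) / (lam 0 i - lam 0 j)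
                  else derive1 f (lam 0 i)).

Definition sqnorm (R : pzRingType) (n : nat) (u : 'cV[R]_n) : R :=
  \sum_i u i 0 ^+ 2.

(* Main.v *)
Require Import Defs.
From HB Require Import structures.
From mathcomp Require Import all_boot all_order all_algebra.
From mathcomp Require Import all_classical all_reals.
From mathcomp Require Import topology normedtype derive.
From mathcomp Require Import ring.
Import Order.TTheory GRing.Theory Num.Theory numFieldNormedType.Exports.
Local Open Scope ring_scope.

Lemma had_sym (R : realType) (m : nat) (c : 'cV[R]_m) f lam :
  (hadamard (c *m c^T) (divdiff f lam))^T = hadamard (c *m c^T) (divdiff f lam).
Proof.
apply/matrixP => i j; rewrite /hadamard /divdiff !mxE !big_ord1 !mxE.
rewrite [lam 0 j == _]eq_sym.
case: eqP => [->|/eqP ne] /=; first by rewrite [c j _ * _]mulrC.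
rewrite [c j _ * _]mulrC; congr (_ * _).
by rewrite -[lam 0 j - _]opprB -[f (lam 0 j) - _]opprB invrN mulrN mulNr opprK.
Qed.

Lemma had_comm (R : realType) (m : nat) (c : 'cV[R]_m) f lam :
  let M := hadamard (c *m c^T) (divdiff f lam) in
  let h : 'cV[R]_m := \col_i (c i 0 * f (lam 0 i)) in
  M *m diag_mx lam - diag_mx lam *m M = c *m h^T - h *m c^T.
Proof.
move=> M h; apply/matrixP => i j.
rewrite mul_mx_diag mul_diag_mx /M /h /hadamard /divdiff !mxE !big_ord1 !mxE.
case: eqP => [e|/eqP ne] /=.
  rewrite e; ring.
have ne' : lam 0 i - lam 0 j != 0 by rewrite subr_eq0.
by field.
Qed.

Theorem lemma2 (R : realType) (m n : nat) (T Q : 'M[R]_m.+1) (lam : 'rV[R]_m.+1)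
    (f : R -> R) (a b : R) (u : 'cV[R]_n) (S : 'M[R]_m.+1) :
  T^T = T ->
  Q *m Q^T = 1%:M ->
  T = Q *m diag_mx lam *m Q^T ->
  (forall i, a < lam 0 i < b) ->
  (forall x, a < x < b -> derivable f x 1) ->
  {in `]a, b[, continuous (derive1 f)} ->
  u != 0 ->
  S^T = - S ->
  S *m e1 R m = 0 ->
  let c := Q^T *m e1 R m in
  let G := sqnorm u *: (Q *m hadamard (c *m c^T) (divdiff f lam) *m Q^T) in
  \tr (G^T *m (T *m S - S *m T)) = 0.
Proof.
move=> _ QQt HT _ _ _ _ HS Se c G.
have QtQ : Q^T *m Q = 1%:M by apply: mulmx1C.
have Xc : Q^T *m S *m Q *m c = 0.
  by rewrite /c -!mulmxA (mulmxA Q) QQt mul1mx Se mulmx0.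
have MT := @had_sym _ _ c f lam.
have Mcomm := @had_comm _ _ c f lam.
rewrite /G; clearbody c; clear G.
set M := hadamard (c *m c^T) (divdiff f lam) in MT Mcomm *.
set h : 'cV[R]_m.+1 := \col_i (c i 0 * f (lam 0 i)) in Mcomm *.
set D := diag_mx lam in Mcomm HT *.
set X := Q^T *m S *m Q in Xc *.
have XT : X^T = - X by rewrite /X !trmx_mul trmxK HS mulNmx mulmxN mulmxA.
have cX : c^T *m X = 0.
  by rewrite -[c^T *m X]trmxK trmx_mul trmxK XT mulNmx Xc oppr0 trmx0.
have t1 : \tr (Q *m M *m Q^T *m (T *m S)) = \tr (M *m D *m X).
  rewrite HT /X -!mulmxA (mulmxA Q^T Q) QtQ mul1mx mxtrace_mulC.
  by rewrite !mulmxA.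
have t2 : \tr (Q *m M *m Q^T *m (S *m T)) = \tr (D *m M *m X).
  rewrite HT /X -!mulmxA mxtrace_mulC !mulmxA -(mulmxA _ Q^T Q) QtQ mulmx1.
  by rewrite mxtrace_mulC !mulmxA.
rewrite [(_ *: _)^T]linearZ /= -scalemxAl linearZ /=.
rewrite !trmx_mul trmxK MT mulmxA mulmxBr linearB /= t1.
rewrite t2 -linearB /= -mulmxBl Mcomm mulmxBl linearB /=.
rewrite -(mulmxA c) mxtrace_mulC -mulmxA Xc mulmx0 linear0.
by rewrite -(mulmxA h) cX mulmx0 linear0 subrr mulr0.
Qed.
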